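(* For every vertex $\mathbf{x}$ of $P^n_{\mathrm{SEP}}$, the optimal values of the linear programs $\mathcal{D}\mathrm{OPT}^{\mathrm{I}}(\mathbf{x})$ and $\mathcal{D}\mathrm{OPT}^+(\mathbf{x})$ coincide.
   Context: $K_n=(V_n,E_n)$ is the complete undirected graph on $n$ nodes; $\delta(S)$ is the set of edges with exactly one endpoint in $S$. $P^n_{\mathrm{SEP}}=\{\mathbf{x}\in\mathbb{R}^{E_n} : \sum_{e\in\delta(v)}x_e=2\ \forall v;\ \sum_{e\in\delta(S)}x_e\ge 2\ \forall S \text{ with } 3\le|S|\le n-3;\ 0\le x_e\le 1\}$; a vertex is an extreme point. A tour is a Hamiltonian cycle of $K_n$, identified with its 0/1 characteristic vector $\mathbf{t}$. A walk on $K_n$ is a closed walk visiting every node at least once, identified with its characteristic vector $\mathbf{w}$ ($w_{ij}$ = number of traversals of edge $ij$); only walks with $w_{ij}\in\{0,1,2\}$ for all edges are considered. Edges are unordered ($ij=ji$), so $\lambda_{ijk}$ and $\lambda_{jik}$ denote the same variable (but $\lambda_{ijk}\ne\lambda_{kji}$). $\mathcal{D}\mathrm{OPT}^+(\mathbf{x})$: maximize $\sum_{\mathbf{t}\text{ tour}}\mu_{\mathbf{t}}$ subject to $\sum_{k\ne i,j}(-\lambda_{ijk}+\lambda_{ikj}+\lambda_{jki})+\sum_{\mathbf{t}}t_{ij}\mu_{\mathbf{t}}\le x_{ij}$ for all $ij\in E_n$, $\lambda_{ijk}\ge0$ for all $ij\in E_n$, $k\in V_n\setminus\{i,j\}$,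 $\mu_{\mathbf{t}}\ge0$. $\mathcal{D}\mathrm{OPT}^{\mathrm{I}}(\mathbf{x})$: the same program with tours replaced by walks on $K_n$, i.e. maximize $\sum_{\mathbf{w}}\mu_{\mathbf{w}}$ subject to $\sum_{k\ne i,j}(-\lambda_{ijk}+\lambda_{ikj}+\lambda_{jki})+\sum_{\mathbf{w}}w_{ij}\mu_{\mathbf{w}}\le x_{ij}$ for all $ij\in E_n$, $\lambda\ge0$, $\mu_{\mathbf{w}}\ge0$ for all walks $\mathbf{w}$ on $K_n$. *)

(* Defs.v *)
From HB Require Import structures.
From mathcomp Require Import all_boot all_order all_algebra.
From mathcomp Require Import boolp reals.
Set Implicit Arguments. Unset Strict Implicit. Unset Printing Implicit Defensive.
Import Order.TTheory GRing.Theory Num.Theory.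
Local Open Scope ring_scope.

Definition edge (n : nat) := {e : {set 'I_n} | #|e| == 2%N}.

(* Characteristic (traversal-count) vector of the closed walk
   s = [:: v_0; ...; v_{m-1}] (returning from v_{m-1} to v_0):
   number of indices i with {v_i, v_{i+1 mod m}} = e. *)
Definition walk_count (n : nat) (s : seq 'I_n) (e : edge n) : nat :=
  count (fun p : 'I_n * 'I_n => [set p.1; p.2] == val e) (zip s (rot 1 s)).

Definition is_walk (n : nat) (w : {ffun edge n -> 'I_3}) : Prop :=
  exists s : seq 'I_n,
    [/\ cycle (fun a b : 'I_n => a != b) s,
        (forall v : 'I_n, v \in s) &
        (forall e : edge n, (w e : nat) = walk_count s e)].

Definition is_tour (n : nat) (t : {ffun edge n -> 'I_3}) : Prop :=
  exists s : seq 'I_n,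
    [/\ (3 <= size s)%N, uniq s,
        (forall v : 'I_n, v \in s) &
        (forall e : edge n, (t e : nat) = walk_count s e)].

Definition at2 (n : nat) (T : Type) (d : T) (f : edge n -> T) (i j : 'I_n) : T :=
  oapp f d (insub [set i; j] : option (edge n)).

Definition in_SEP (R : realType) (n : nat) (x : edge n -> R) : Prop :=
  [/\ (forall v : 'I_n, \sum_(e : edge n | v \in val e) x e = 2),
      (forall S : {set 'I_n}, (3 <= #|S| <= n - 3)%N ->
         2 <= \sum_(e : edge n | #|val e :&: S| == 1%N) x e) &
      (forall e : edge n, 0 <= x e <= 1)].

Definition is_SEP_vertex (R : realType) (n : nat) (x : edge n -> R) : Prop :=
  in_SEP x /\
  forall (y z : edge n -> R) (c : R), in_SEP y -> in_SEP z -> 0 < c < 1 ->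
    (forall e, x e = c * y e + (1 - c) * z e) -> forall e, y e = z e.

(* The LP  DOPT_V(x): maximize sum_{w in V} mu_w subject to
   sum_{k <> i,j} (-lam_ijk + lam_ikj + lam_jki) + sum_{w in V} w_ij mu_w <= x_ij
   for all ij, lam >= 0, mu >= 0, where V is the class of vectors
   (tours for DOPT^+, walks for DOPT^I).  lam_{ijk} is lam e k with e = {i,j}. *)
Definition DOPT_feasible (R : realType) (n : nat)
    (V : {ffun edge n -> 'I_3} -> Prop) (x : edge n -> R)
    (lam : edge n -> 'I_n -> R) (mu : {ffun edge n -> 'I_3} -> R) : Prop :=
  [/\ (forall (i j : 'I_n), i != j ->
         \sum_(k : 'I_n | (k != i) && (k != j))
            (- at2 0 (fun e => lam e k) i j
             + at2 0 (fun e => lam e j) i k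
             + at2 0 (fun e => lam e i) j k)
         + \sum_(w | `[< V w >]) ((at2 0%N (fun e => (w e : nat)) i j)%:R * mu w)
         <= at2 0 x i j),
      (forall (e : edge n) (k : 'I_n), k \notin val e -> 0 <= lam e k) &
      (forall w, V w -> 0 <= mu w)].

Definition DOPT_objective (R : realType) (n : nat)
    (V : {ffun edge n -> 'I_3} -> Prop) (mu : {ffun edge n -> 'I_3} -> R) : R :=
  \sum_(w | `[< V w >]) mu w.

Definition DOPT_opt_value (R : realType) (n : nat)
    (V : {ffun edge n -> 'I_3} -> Prop) (x : edge n -> R) (v : R) : Prop :=
  (exists lam mu, DOPT_feasible V x lam mu /\ DOPT_objective V mu = v) /\
  (forall lam mu, DOPT_feasible V x lam mu -> DOPT_objective V mu <= v).

(* Main.v *)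
Require Import Defs.
From HB Require Import structures.
From mathcomp Require Import all_boot all_order all_algebra.
From mathcomp Require Import boolp reals.
From mathcomp Require Import classical_sets topology normedtype derive.
From mathcomp Require Import lra ring.
From Stdlib Require Import Lia.
From mathcomp Require Import zify.
Set Implicit Arguments. Unset Strict Implicit. Unset Printing Implicit Defensive.
Import Order.TTheory GRing.Theory Num.Theory.
Import numFieldNormedType.Exports.
Local Open Scope ring_scope.


Lemma zip_cons_rcons (T : Type) (a y : T) m :
  zip (a :: m) (rcons m y) = rcons (zip (belast a m) m) (last a m, y).
Proof. by elim: m a => [|b m IH] a //=; rewrite IH. Qed.

Lemma cnt_cons (T : Type) (P : pred (T * T)) a m :
  count P (zip (a :: m) (rot 1 (a :: m))) =
  (count P (zip (belast a m) m) + P (last a m, a))%N.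
Proof. by rewrite rot1_cons zip_cons_rcons -cats1 count_cat /= addn0. Qed.

Lemma cnt_cons2 (T : Type) (P : pred (T * T)) k a m :
  count P (zip (k :: a :: m) (rot 1 (k :: a :: m))) =
  (P (k, a) + count P (zip (belast a m) m) + P (last a m, k))%N.
Proof.
rewrite rot1_cons rcons_cons /= zip_cons_rcons -cats1 count_cat /= addn0.
by rewrite addnA.
Qed.

Lemma drop_zip' (T U : Type) r (s : seq T) (t : seq U) :
  drop r (zip s t) = zip (drop r s) (drop r t).
Proof. by elim: s t r => [|x s IH] [|y t] [|r] //=; rewrite ?IH //; case: (drop _ _). Qed.

Lemma take_zip' (T U : Type) r (s : seq T) (t : seq U) :
  take r (zip s t) = zip (take r s) (take r t).
Proof. by elim: s t r => [|x s IH] [|y t] [|r] //=; rewrite ?IH //; case: (take _ _). Qed.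

Lemma zip_rot (T U : Type) r (s : seq T) (t : seq U) : size s = size t ->
  zip (rot r s) (rot r t) = rot r (zip s t).
Proof.
move=> st; rewrite /rot zip_cat; last by rewrite !size_drop st.
by rewrite drop_zip' take_zip'.
Qed.

Lemma cnt_rot (T : Type) (P : pred (T * T)) r (s : seq T) :
  count P (zip (rot r s) (rot 1 (rot r s))) = count P (zip s (rot 1 s)).
Proof.
rewrite rot_rot zip_rot; last by rewrite !size_rot.
by rewrite /rot count_cat addnC -count_cat cat_take_drop.
Qed.

Lemma set2_eq n (x y a b : 'I_n) : a != b ->
  ([set x; y] == [set a; b]) = ((x == a) && (y == b)) || ((x == b) && (y == a)).
Proof.
move=> ab; apply/eqP/idP => [/setP H|].
  have := H a; have := H b; have := H x; have := H y; rewrite !inE !eqxx /= ?orbT.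
  move: ab; do ![case: eqP => //= ?; subst] .
by case/orP => /andP [/eqP -> /eqP ->] //; rewrite finset.setUC.
Qed.



Definition Aterm (R : realType) n (lam : edge n -> 'I_n -> R) (i j : 'I_n) : R :=
  \sum_(k : 'I_n | (k != i) && (k != j))
     (- at2 0 (fun e => lam e k) i j
      + at2 0 (fun e => lam e j) i k
      + at2 0 (fun e => lam e i) j k).

Definition dl (R : realType) n (a b c : 'I_n) : edge n -> 'I_n -> R :=
  fun e k => ((val e == [set a; b]) && (k == c))%:R.

Lemma at2_ind (R : realType) n (S : {set 'I_n}) (P : bool) (x y : 'I_n) :
  #|S| = 2%N ->
  at2 0 (fun e : edge n => ((val e == S) && P)%:R : R) x y = (([set x; y] == S) && P)%:R.
Proof.
move=> cS; rewrite /at2; case: insubP => [e He <- | H] //=.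
case: eqP => // E; move: H; by rewrite E cS.
Qed.

Lemma sum_pick (R : realType) n (C : pred 'I_n) (Q : bool) (c : 'I_n) :
  \sum_(k | C k) ((Q && (k == c))%:R : R) = (Q && C c)%:R.
Proof.
rewrite big_mkcond (bigD1 c) //= big1 => [|k kc]; last first.
  by rewrite (negbTE kc) andbF; case: (C k).
by rewrite eqxx andbT addr0; case: (C c); case: Q.
Qed.

Lemma Aterm_dl (R : realType) n (a b c i j : 'I_n) :
  a != b -> c != a -> c != b -> i != j ->
  Aterm (dl R a b c) i j =
    - (([set a; b] == [set i; j]) : nat)%:R + (([set a; c] == [set i; j]) : nat)%:R
    + (([set b; c] == [set i; j]) : nat)%:R.
Proof.
move=> ab ca cb ij; rewrite /Aterm /dl.
have c2 : forall u v : 'I_n, u != v -> #|[set u; v]| = 2%N by move=> u v uv; rewrite cards2 uv.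
have H1 : forall (x y : 'I_n) (P : bool),
  at2 0 (fun e : edge n => ((val e == [set a; b]) && P)%:R : R) x y = (([set x; y] == [set a; b]) && P)%:R.
  by move=> x y P; apply: at2_ind; rewrite c2.
under eq_bigr => k _ do rewrite !H1 !set2_eq //.
rewrite (eq_sym [set a; b]) (eq_sym [set a; c]) (eq_sym [set b; c]) !set2_eq //; last by rewrite eq_sym.
have E2 : forall (X Y Z : bool) (k u v : 'I_n), u != v ->
   ((((X && (k == u)) || (Y && (k == v))) && Z)%:R : R) =
   ((X && Z) && (k == u))%:R + ((Y && Z) && (k == v))%:R.
  move=> X Y Z k u v uv; case: (k =P u) => [->|_]; [rewrite (negbTE uv)|];
  by case: X; case: Y; case: Z; rewrite /= ?andbT ?andbF ?mulr0n ?mulr1n ?addr0 ?add0r.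
have ba : b != a by rewrite eq_sym.
rewrite !big_split /= sumrN sum_pick.
under eq_bigr => k _ do rewrite !(E2 _ _ _ _ _ _ ba).
under [X in _ + X]eq_bigr => k _ do rewrite !(E2 _ _ _ _ _ _ ba).
rewrite !big_split /= !sum_pick.
move: ab ca cb ij; rewrite ![c == _]eq_sym.
do ![case: eqP => //= ?; subst]; rewrite /= ?mulr0n ?mulr1n; lra.
by rewrite eq_sym.
Qed.



Definition wc n (s : seq 'I_n) (i j : 'I_n) : nat :=
  count (fun p : 'I_n * 'I_n => [set p.1; p.2] == [set i; j]) (zip s (rot 1 s)).

Lemma at2_add (R : realType) n (f g : edge n -> R) x y :
  at2 0 (fun e => f e + g e) x y = at2 0 f x y + at2 0 g x y.
Proof. by rewrite /at2; case: insubP => [e _ _|_] /=; rewrite ?addr0. Qed.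

Lemma at2_0 (R : realType) n x y : at2 0 (fun e : edge n => (0 : R)) x y = 0.
Proof. by rewrite /at2; case: insubP. Qed.

Lemma at2_sum (R : realType) n (I : finType) (P : pred I) (F : I -> edge n -> R) x y :
  at2 0 (fun e => \sum_(w | P w) F w e) x y = \sum_(w | P w) at2 0 (F w) x y.
Proof. by rewrite /at2; case: insubP => [e _ _|_] //=; rewrite big1_eq. Qed.

Lemma at2_scale (R : realType) n (c : R) (f : edge n -> R) x y :
  at2 0 (fun e => c * f e) x y = c * at2 0 f x y.
Proof. by rewrite /at2; case: insubP => [e _ _|_] /=; rewrite ?mulr0. Qed.

Lemma Aterm_add (R : realType) n (l1 l2 : edge n -> 'I_n -> R) i j :
  Aterm (fun e k => l1 e k + l2 e k) i j = Aterm l1 i j + Aterm l2 i j.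
Proof.
rewrite /Aterm -big_split /=; apply: eq_bigr => k _.
rewrite !(at2_add (fun e => l1 e _) (fun e => l2 e _)); lra.
Qed.

Lemma Aterm0 (R : realType) n i j : Aterm (fun (e : edge n) (k : 'I_n) => (0 : R)) i j = 0.
Proof. by rewrite /Aterm big1 // => k _; rewrite !at2_0; lra. Qed.

Lemma Aterm_sum (R : realType) n (I : finType) (P : pred I) (c : I -> R)
   (L : I -> edge n -> 'I_n -> R) i j :
  Aterm (fun e k => \sum_(w | P w) c w * L w e k) i j = \sum_(w | P w) c w * Aterm (L w) i j.
Proof.
rewrite /Aterm; symmetry; under eq_bigr => w _ do rewrite big_distrr; symmetry.
rewrite exchange_big /=; apply: eq_bigr => k _.
rewrite !(@at2_sum R n I P (fun w e => c w * L w e _)) -sumrN -!big_split /=.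
apply: eq_bigr => w _; rewrite !(@at2_scale R n (c w) (fun e => L w e _)); lra.
Qed.

Lemma dl_ge0 (R : realType) n (a b c : 'I_n) e k : 0 <= dl R a b c e k.
Proof. by rewrite /dl ler0n. Qed.

Lemma shortcut (R : realType) n (hn : (2 < n)%N) (s : seq 'I_n) :
  cycle (fun a b : 'I_n => a != b) s -> (forall v, v \in s) ->
  exists (s' : seq 'I_n) (lam : edge n -> 'I_n -> R),
  [/\ uniq s', (forall v, v \in s'),
      (forall (e : edge n) (k : 'I_n), k \notin val e -> 0 <= lam e k) &
      (forall i j, i != j -> ((wc s i j)%:R : R) = (wc s' i j)%:R + Aterm lam i j)].
Proof.
have [N HN] := ubnP (size s); elim: N s HN => // N IH s HN cyc cov.
case U: (uniq s).
  exists s, (fun _ _ => 0); split=> // i j _.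
  by rewrite Aterm0 addr0.
have x0 : 'I_n := Ordinal (ltnW hn).
move/negbT: U => /(uniqPn x0) [i0 [j0 [ij0 js E]]].
have i0s : (i0 < size s)%N by apply: ltn_trans js.
have Hrot : rot i0 s = nth x0 s i0 :: (drop i0.+1 s ++ take i0 s).
  by rewrite /rot (drop_nth x0 i0s).
set k := nth x0 s i0 in Hrot.
set t := drop i0.+1 s ++ take i0 s in Hrot.
have kt : k \in t.
  rewrite mem_cat; apply/orP; left; rewrite /k E.
  have -> : j0 = (i0.+1 + (j0 - i0.+1))%N by rewrite subnKC.
  rewrite -nth_drop; apply: mem_nth; rewrite size_drop; lia.
have wcrot : forall i j, wc s i j = wc (k :: t) i j by move=> i j; rewrite /wc -Hrot cnt_rot.
have cyc1 : cycle (fun a b : 'I_n => a != b) (k :: t) by rewrite -Hrot rot_cycle.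
have cov1 : forall v, v \in k :: t by move=> v; rewrite -Hrot mem_rot.
have sz1 : size (k :: t) = size s by rewrite -Hrot size_rot.
clear Hrot; clearbody t; case: t => [//|a m] in kt cyc1 cov1 sz1 wcrot *.
move: (cyc1); rewrite /= => /andP [ka]; rewrite rcons_path => /andP [pm bk].
have km : k \in m by move: kt; rewrite in_cons (negbTE ka).
have [ab|ab] := eqVneq a (last a m); last first.
  set b := last a m in ab bk pm.
  have cyc2 : cycle (fun a b : 'I_n => a != b) (a :: m) by rewrite /= rcons_path pm eq_sym.
  have cov2 : forall v, v \in a :: m.
    by move=> v; move: (cov1 v); rewrite in_cons => /orP [/eqP ->|].
  have [|s' [lam1 [U' cov' nn1 eq1]]] := IH (a :: m) _ cyc2 cov2.
    by rewrite -ltnS; move: HN; rewrite -sz1.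
  exists s', (fun e k' => lam1 e k' + dl R a b k e k'); split=> //.
    by move=> e k' H; rewrite addr_ge0 ?nn1 ?dl_ge0.
  move=> i j ij; rewrite wcrot Aterm_add Aterm_dl //; last by rewrite eq_sym.
  move: (eq1 i j ij); rewrite /wc cnt_cons cnt_cons2 -/b !natrD.
  rewrite (finset.setUC [set k] [set a]) (finset.setUC [set b] [set a]) => H; lra.
case/lastP: m km ka kt cyc1 cov1 sz1 wcrot pm bk ab => [//|m' z] km ka kt cyc1 cov1 sz1 wcrot pm bk.
rewrite last_rcons => ab; subst z.
have cyc2 : cycle (fun a b : 'I_n => a != b) (a :: m') by rewrite /=.
have cov2 : forall v, v \in a :: m'.
  move=> v; move: (cov1 v); rewrite in_cons => /orP [/eqP ->|].
    by move: km; rewrite mem_rcons.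
  by rewrite in_cons mem_rcons in_cons orbA orbb.
have [|s' [lam1 [U' cov' nn1 eq1]]] := IH (a :: m') _ cyc2 cov2.
  by move: sz1 HN; rewrite /= size_rcons; lia.
have [c Hc] : exists c : 'I_n, c \notin [set a; k].
  case: (pickP (fun c => c \notin [set a; k])) => [c Hc|H]; first by exists c.
  have : (#|'I_n| <= #|[set a; k]|)%N.
    by apply/subset_leq_card/fintype.subsetP => v _; move: (H v) => /negbFE.
  rewrite card_ord cards2; case: (a != k) => /=; lia.
move: Hc; rewrite !inE negb_or => /andP [ca ck].
exists s', (fun e k' => lam1 e k' + (dl R a c k e k' + dl R k c a e k')); split=> //.
  by move=> e k' H; rewrite !addr_ge0 ?nn1 ?dl_ge0.
have ak : a != k by rewrite eq_sym.
have kc : k != c by rewrite eq_sym.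
have ac : a != c by rewrite eq_sym.
move=> i j ij; rewrite wcrot !Aterm_add Aterm_dl // Aterm_dl //.
move: (eq1 i j ij); rewrite /wc cnt_cons2 cnt_cons belast_rcons zip_cons_rcons -cats1 count_cat /= addn0 last_rcons !natrD.
rewrite (finset.setUC [set k] [set a]) (finset.setUC [set c] [set k]) (finset.setUC [set c] [set a]) => H; lra.
Qed.



Lemma count_uniq_le2 n (s : seq 'I_n) (e : edge n) : uniq s -> (walk_count s e <= 2)%N.
Proof.
move=> Us; rewrite /walk_count.
apply: (@leq_trans (count (fun p : 'I_n * 'I_n => p.1 \in val e) (zip s (rot 1 s)))).
  by apply: sub_count => p /eqP <-; rewrite set21.
have -> : count (fun p : 'I_n * 'I_n => p.1 \in val e) (zip s (rot 1 s)) =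
  count (mem (val e)) (unzip1 (zip s (rot 1 s))) by rewrite count_map.
rewrite unzip1_zip ?size_rot //.
rewrite -size_filter; have H2 : #|val e| = 2%N by apply/eqP; exact: (valP e).
apply: (@leq_trans #|val e|); last by rewrite H2.
rewrite cardE; apply: uniq_leq_size; first exact: filter_uniq.
by move=> y; rewrite mem_filter mem_enum => /andP [].
Qed.

Lemma path_uniq n (x : 'I_n) s : uniq (x :: s) -> path (fun a b : 'I_n => a != b) x s.
Proof.
elim: s x => [|y s IH] x //= /andP [].
rewrite in_cons negb_or => /andP [xy _] /andP [ys Us].
by rewrite xy IH //= ys.
Qed.

Lemma uniq_cycle n (s : seq 'I_n) : uniq s -> (2 <= size s)%N ->
  cycle (fun a b : 'I_n => a != b) s.
Proof.
case: s => [//|x [//|y s]] Us _.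
have P := path_uniq Us.
move: P; rewrite [cycle _ _]/= rcons_path /= => /andP [-> ->] /=.
have : last y s \in y :: s by apply: mem_last.
by move: Us => /= /andP [xs _] H; apply/eqP => E; move: xs; rewrite -E H.
Qed.

Lemma tour_walk n (hn : (2 < n)%N) (t : {ffun edge n -> 'I_3}) : is_tour t -> is_walk t.
Proof.
case=> s [sz Us cov teq]; exists s; split=> //.
by apply: uniq_cycle => //; lia.
Qed.

Lemma at2_wc n (w : {ffun edge n -> 'I_3}) (s : seq 'I_n) i j :
  (forall e, (w e : nat) = walk_count s e) -> i != j ->
  at2 0%N (fun e => (w e : nat)) i j = wc s i j.
Proof.
move=> weq ij; rewrite /at2; case: insubP => [e _ He|H] /=.
  by rewrite weq /walk_count He.
by move: H; rewrite cards2 ij.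
Qed.

Definition lnn (R : realType) n (lam : edge n -> 'I_n -> R) :=
  forall (e : edge n) (k : 'I_n), k \notin val e -> 0 <= lam e k.

Lemma walk_tour_vec (R : realType) n (hn : (2 < n)%N) (w : {ffun edge n -> 'I_3}) :
  is_walk w -> exists (t : {ffun edge n -> 'I_3}) (lam : edge n -> 'I_n -> R),
  [/\ is_tour t, lnn lam &
     forall i j, i != j -> ((at2 0%N (fun e => (w e : nat)) i j)%:R : R) =
        (at2 0%N (fun e => (t e : nat)) i j)%:R + Aterm lam i j].
Proof.
case=> s [cyc cov weq].
have [s' [lam [U' cov' nn eq]]] := shortcut R hn cyc cov.
have teq : forall e, (([ffun e => inord (walk_count s' e)] : {ffun edge n -> 'I_3}) e : nat)
                    = walk_count s' e.
  by move=> e; rewrite ffunE inordK // ltnS count_uniq_le2.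
exists [ffun e => inord (walk_count s' e)], lam; split=> //.
  exists s'; split=> //.
  have : (size (enum 'I_n) <= size s')%N.
    by apply: uniq_leq_size; [exact: enum_uniq | move=> v _; exact: cov'].
  rewrite size_enum_ord; lia.
by move=> i j ij; rewrite (at2_wc weq ij) (at2_wc teq ij) eq.
Qed.



Definition Wterm (R : realType) n (V : {ffun edge n -> 'I_3} -> Prop)
  (mu : {ffun edge n -> 'I_3} -> R) (i j : 'I_n) : R :=
  \sum_(w | `[< V w >]) ((at2 0%N (fun e => (w e : nat)) i j)%:R * mu w).

Lemma feasE (R : realType) n V (x : edge n -> R) lam mu :
  DOPT_feasible V x lam mu <->
  [/\ forall i j, i != j -> Aterm lam i j + Wterm V mu i j <= at2 0 x i j,
      lnn lam & forall w, V w -> 0 <= mu w].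
Proof. by split; case=> H1 H2 H3; split. Qed.

Lemma walk2tour (R : realType) n (hn : (2 < n)%N) (x : edge n -> R) lam mu :
  DOPT_feasible (@is_walk n) x lam mu -> exists lam' mu',
  DOPT_feasible (@is_tour n) x lam' mu' /\
  DOPT_objective (@is_tour n) mu' = DOPT_objective (@is_walk n) mu.
Proof.
move/feasE => [F1 F2 F3].
have H : forall w : {ffun edge n -> 'I_3},
  exists p : {ffun edge n -> 'I_3} * (edge n -> 'I_n -> R), is_walk w ->
  [/\ is_tour p.1, lnn p.2 & forall i j, i != j ->
     ((at2 0%N (fun e => (w e : nat)) i j)%:R : R) =
        (at2 0%N (fun e => (p.1 e : nat)) i j)%:R + Aterm p.2 i j].
  move=> w; case: (pselect (is_walk w)) => [Ww|nW].
    by have [t [l [? ? ?]]] := walk_tour_vec R hn Ww; exists (t, l).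
  by exists (w, fun _ _ => 0).
have [f Hf] := choice H.
pose T w := (f w).1; pose L w := (f w).2.
have TT : forall w, `[< is_walk w >] -> `[< is_tour (T w) >].
  by move=> w /asboolP Ww; apply/asboolP; case: (Hf w Ww).
have obj : \sum_(t | `[< is_tour t >]) \sum_(w | `[< is_walk w >] && (T w == t)) mu w =
           \sum_(w | `[< is_walk w >]) mu w.
  by rewrite -(partition_big T).
exists (fun e k => lam e k + \sum_(w | `[< is_walk w >]) mu w * L w e k).
exists (fun t => \sum_(w | `[< is_walk w >] && (T w == t)) mu w).
split; last exact: obj.
apply/feasE; split.
- move=> i j ij; rewrite Aterm_add Aterm_sum /Wterm.
  have -> : \sum_(t | `[< is_tour t >]) (at2 0%N (fun e => (t e : nat)) i j)%:R *
        \sum_(w | `[< is_walk w >] && (T w == t)) mu w =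
      \sum_(w | `[< is_walk w >]) (at2 0%N (fun e => (T w e : nat)) i j)%:R * mu w.
    rewrite [RHS](partition_big T (fun t => `[< is_tour t >])) //.
    apply: eq_bigr => t _; rewrite big_distrr; apply: eq_bigr => w /andP [_ /eqP <-] //.
  rewrite -addrA.
  have -> : \sum_(w | `[< is_walk w >]) mu w * Aterm (L w) i j +
     \sum_(w | `[< is_walk w >]) (at2 0%N (fun e => (T w e : nat)) i j)%:R * mu w =
     Wterm (@is_walk n) mu i j.
    rewrite /Wterm -big_split; apply: eq_bigr => w /asboolP Ww.
    case: (Hf w Ww) => _ _ Heq; rewrite (Heq i j ij) /L /T /=; ring.
  exact: F1.
- move=> e k ke; apply: addr_ge0; first exact: F2.
  apply: sumr_ge0 => w /asboolP Ww; apply: mulr_ge0; first exact: F3.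
  by case: (Hf w Ww) => _ + _; apply.
- by move=> t _; apply: sumr_ge0 => w /andP [/asboolP Ww _]; exact: F3.
Qed.

Lemma tour2walk (R : realType) n (hn : (2 < n)%N) (x : edge n -> R) lam mu :
  DOPT_feasible (@is_tour n) x lam mu -> exists mu',
  DOPT_feasible (@is_walk n) x lam mu' /\
  DOPT_objective (@is_walk n) mu' = DOPT_objective (@is_tour n) mu.
Proof.
move/feasE => [F1 F2 F3].
have key : forall F : {ffun edge n -> 'I_3} -> R,
  \sum_(w | `[< is_walk w >]) F w * (if `[< is_tour w >] then mu w else 0) =
  \sum_(w | `[< is_tour w >]) F w * mu w.
  move=> F; rewrite big_mkcond [RHS]big_mkcond; apply: eq_bigr => w _.
  case: (asboolP (is_tour w)) => Tw; last by case: asboolP => _; rewrite ?mulr0.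
  by rewrite (asboolT (tour_walk hn Tw)).
exists (fun w => if `[< is_tour w >] then mu w else 0); split.
  apply/feasE; split=> //.
  - by move=> i j ij; rewrite /Wterm key; exact: F1.
  - by move=> w _; case: asboolP => // /F3.
rewrite /DOPT_objective; have := key (fun _ => 1); rewrite !(eq_bigr _ (fun w _ => mul1r _)) //.
Qed.



Section S3.
Variables (R : realType) (n : nat).
Definition D3 (i j k : 'I_n) := (j != i) && (k != i) && (k != j).
Definition S3 (F : 'I_n -> 'I_n -> 'I_n -> R) :=
  \sum_i \sum_j \sum_k (if D3 i j k then F i j k else 0).

Lemma triple_mk (F : 'I_n -> 'I_n -> 'I_n -> R) :
  \sum_i \sum_(j | j != i) \sum_(k | (k != i) && (k != j)) F i j k = S3 F.
Proof.
apply: eq_bigr => i _; rewrite big_mkcond; apply: eq_bigr => j _.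
rewrite /D3; case: (j != i) => /=; first by rewrite big_mkcond.
by rewrite big1_eq.
Qed.

Lemma S3_lin (F1 F2 F3 : 'I_n -> 'I_n -> 'I_n -> R) :
  S3 (fun i j k => - F1 i j k + F2 i j k + F3 i j k) = - S3 F1 + S3 F2 + S3 F3.
Proof.
rewrite /S3 -sumrN -!big_split; apply: eq_bigr => i _.
rewrite -sumrN -!big_split; apply: eq_bigr => j _.
rewrite -sumrN -!big_split; apply: eq_bigr => k _.
by case: D3 => /=; lra.
Qed.

Lemma S3_swap (F : 'I_n -> 'I_n -> 'I_n -> R) : S3 (fun i j k => F i k j) = S3 F.
Proof.
rewrite /S3; apply: eq_bigr => i _; rewrite [LHS]exchange_big.
apply: eq_bigr => a _; apply: eq_bigr => b _.
suff -> : D3 i b a = D3 i a b by [].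
by rewrite /D3; do ![case: eqP => //= ?; subst].
Qed.

Lemma S3_rot (F : 'I_n -> 'I_n -> 'I_n -> R) : S3 (fun i j k => F j k i) = S3 F.
Proof.
rewrite /S3 [LHS]exchange_big; apply: eq_bigr => a _; rewrite [LHS]exchange_big.
apply: eq_bigr => b _; apply: eq_bigr => c _.
suff -> : D3 c a b = D3 a b c by [].
by rewrite /D3; do ![case: eqP => //= ?; subst].
Qed.
End S3.

Lemma sumA (R : realType) n (lam : edge n -> 'I_n -> R) :
  \sum_i \sum_(j | j != i) Aterm lam i j =
  S3 (fun i j k => at2 0 (fun e => lam e k) i j).
Proof.
rewrite /Aterm triple_mk.
rewrite (S3_lin (fun i j k => at2 0 (fun e => lam e k) i j)
   (fun i j k => at2 0 (fun e => lam e j) i k) (fun i j k => at2 0 (fun e => lam e i) j k)).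
rewrite (S3_swap (fun i j k => at2 0 (fun e => lam e k) i j)).
rewrite (S3_rot (fun i j k => at2 0 (fun e => lam e k) i j)); lra.
Qed.

Lemma le_sum1 (R : realType) (I : finType) (P : pred I) (F : I -> R) i0 :
  P i0 -> (forall i, P i -> 0 <= F i) -> F i0 <= \sum_(i | P i) F i.
Proof.
move=> Pi0 F0; rewrite (bigD1 i0) //= lerDl; apply: sumr_ge0 => i /andP [Pi _].
exact: F0.
Qed.

Lemma le_sum1T (R : realType) (I : finType) (F : I -> R) i0 :
  (forall i, 0 <= F i) -> F i0 <= \sum_i F i.
Proof.
move=> F0; rewrite (bigD1 i0) //= lerDl; apply: sumr_ge0 => i _; exact: F0.
Qed.

Lemma via (R : realType) (a b c : R) : b <= c -> a <= b -> a <= c.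
Proof. by move=> H1 H2; apply: le_trans H1. Qed.

Definition Xb (R : realType) n (x : edge n -> R) := \sum_i \sum_(j | j != i) at2 0 x i j.

Lemma L_ge0 (R : realType) n (lam : edge n -> 'I_n -> R) i j k :
  lnn lam -> (k != i) && (k != j) -> 0 <= at2 0 (fun e => lam e k) i j.
Proof.
move=> nn /andP [ki kj]; rewrite /at2; case: insubP => [e _ He|_] //=.
by apply: nn; rewrite He !inE negb_or ki kj.
Qed.

Lemma feas_bound (R : realType) n (hn : (2 < n)%N) (x : edge n -> R) lam mu :
  DOPT_feasible (@is_walk n) x lam mu ->
  (forall (e : edge n) k, k \notin val e -> lam e k <= Xb x) /\
  (forall w, is_walk w -> mu w <= Xb x).
Proof.
move/feasE => [F1 F2 F3].
have W0 : forall i j, 0 <= Wterm (@is_walk n) mu i j.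
  move=> i j; apply: sumr_ge0 => w /asboolP Ww; apply: mulr_ge0 => //; exact: F3.
have T0 : forall i j, i != j -> 0 <= \sum_(k | (k != i) && (k != j)) at2 0 (fun e => lam e k) i j.
  by move=> i j _; apply: sumr_ge0 => k Hk; apply: L_ge0.
have T00 : forall i, 0 <= \sum_(j | j != i) \sum_(k | (k != i) && (k != j)) at2 0 (fun e => lam e k) i j.
  by move=> i; apply: sumr_ge0 => j ji; apply: T0; rewrite eq_sym.
have Hsum : \sum_i \sum_(j | j != i) Aterm lam i j + \sum_i \sum_(j | j != i) Wterm (@is_walk n) mu i j
            <= Xb x.
  rewrite -big_split; apply: ler_sum => i _; rewrite -big_split; apply: ler_sum => j ji.
  by apply: F1; rewrite eq_sym.
have SA0 : 0 <= \sum_i \sum_(j | j != i) Aterm lam i j.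
  by rewrite sumA -triple_mk; apply: sumr_ge0 => i _.
have SW0 : 0 <= \sum_i \sum_(j | j != i) Wterm (@is_walk n) mu i j.
  by apply: sumr_ge0 => i _; apply: sumr_ge0.
split.
  move=> e k ke; have := valP e; case/cards2P => i0 [j0 [ij0 He]].
  have -> : lam e k = at2 0 (fun e => lam e k) i0 j0.
    rewrite /at2; case: insubP => [e' _ He'|]; last by rewrite -He (valP e).
    by congr (lam _ _); apply: val_inj; rewrite He' He.
  apply: (via (_ : \sum_i \sum_(j | j != i) Aterm lam i j <= Xb x)); first by lra.
  rewrite sumA -triple_mk.
  apply: (via (le_sum1T i0 _)) => //.
  apply: (via (@le_sum1 _ _ (fun j => j != i0) _ j0 _ _)).
  - by rewrite eq_sym.
  - by move=> j ji; apply: T0; rewrite eq_sym.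
  apply: (@le_sum1 _ _ (fun k0 => (k0 != i0) && (k0 != j0)) (fun k0 => at2 0 (fun e => lam e k0) i0 j0) k); first by move: ke; rewrite He !inE negb_or.
  by move=> k' Hk; apply: L_ge0.
move=> w Ww; have [s [cyc cov weq]] := Ww.
have x0 : 'I_n := Ordinal (ltnW hn).
case: s cyc cov weq => [|u [|v s]] cyc cov weq.
- by have := cov x0.
- have H0 := cov (Ordinal (ltnW hn)); have H1 := cov (Ordinal (ltnW (ltnW hn))).
  by move: H0 H1; rewrite !inE => /eqP <- /eqP.
have uv : u != v by move: cyc => /= /andP [].
have c1 : (1 <= at2 0%N (fun e => (w e : nat)) u v)%N.
  by rewrite (at2_wc weq uv) /wc cnt_cons2 /= eqxx.
have F3w := F3 w Ww.
apply: (@le_trans _ _ ((at2 0%N (fun e => (w e : nat)) u v)%:R * mu w)).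
  by rewrite -{1}(mul1r (mu w)) ler_wpM2r // ler1n.
apply: (@le_trans _ _ (Wterm (@is_walk n) mu u v)).
  apply: (@le_sum1 _ _ (fun w => `[< is_walk w >])); first exact/asboolP.
  by move=> w' /asboolP W'; apply: mulr_ge0 => //; exact: F3.
apply: (@le_trans _ _ (\sum_i \sum_(j | j != i) Wterm (@is_walk n) mu i j)); last by lra.
apply: (via (le_sum1T u _)).
  by move=> i; apply: sumr_ge0.
apply: (@le_sum1 _ _ (fun j => j != u) (fun j => Wterm (@is_walk n) mu u j) v) => //.
by rewrite eq_sym.
Qed.



Section Topo.
Variables (R : realType) (m : nat).
Local Notation V := 'rV[R]_m.

Lemma closed_forall (J : Type) (A : J -> set V) :
  (forall j, closed (A j)) -> closed (fun t => forall j, A j t).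
Proof.
move=> H; have -> : (fun t => forall j, A j t) = bigcap (setT : set J) A.
  by apply/funext => t; apply/propext; split => [Ht j _|Ht j]; [exact: Ht | exact: Ht].
by apply: closed_bigI => j _; exact: H.
Qed.

Lemma closed_imp (P : Prop) (A : set V) : closed A -> closed (fun t => P -> A t).
Proof.
move=> cA; case: (pselect P) => [p|np].
  have -> : (fun t => P -> A t) = A by apply/funext => t; apply/propext; split; [exact | move=> ? ?].
  exact: cA.
have -> : (fun t => P -> A t) = setT by apply/funext => t; apply/propext; split => // _ /np.
exact: closedT.
Qed.

Lemma closed_and (A B : set V) : closed A -> closed B -> closed (fun t => A t /\ B t).
Proof. by move=> cA cB; exact: (closedI cA cB). Qed.

Lemma closed_lef (g : V -> R) (c : R) : continuous g -> closed (fun t => g t <= c).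
Proof.
move=> cg; have := @preimage_closed _ _ g [set y | y <= c] (fun t _ => cg t) (@closed_le _ c).
by [].
Qed.

Lemma closed_gef (g : V -> R) (c : R) : continuous g -> closed (fun t => c <= g t).
Proof.
move=> cg; have := @preimage_closed _ _ g [set y | c <= y] (fun t _ => cg t) (@closed_ge _ c).
by [].
Qed.

Lemma cont_cst (c : R) : continuous (fun _ : V => c).
Proof. exact: cst_continuous. Qed.

Lemma cont_coord j : continuous (fun t : V => t ord0 j).
Proof. exact: coord_continuous. Qed.

Lemma cont_add (g h : V -> R) : continuous g -> continuous h -> continuous (fun t => g t + h t).
Proof. by move=> cg ch t; exact: (cvgD (cg t) (ch t)). Qed.

Lemma cont_opp (g : V -> R) : continuous g -> continuous (fun t => - g t).
Proof. by move=> cg t; exact: (cvgN (cg t)). Qed.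

Lemma cont_scale (c : R) (g : V -> R) : continuous g -> continuous (fun t => c * g t).
Proof. by move=> cg t; exact: (@cvgMl_tmp _ _ _ _ g c _ (cg t)). Qed.

Lemma cont_sum (I : finType) (P : pred I) (F : I -> V -> R) :
  (forall i, continuous (F i)) -> continuous (fun t => \sum_(i | P i) F i t).
Proof.
move=> H; rewrite /index_enum; elim: (Finite.enum I) => [|a l IH].
  have -> : (fun t : V => \sum_(i <- [::] | P i) F i t) = (fun=> 0) by apply/funext => t; rewrite big_nil.
  exact: cont_cst.
case Pa: (P a).
  have -> : (fun t => \sum_(i <- a :: l | P i) F i t) = (fun t => F a t + \sum_(i <- l | P i) F i t).
    by apply/funext => t; rewrite big_cons Pa.
  exact: cont_add.
have -> : (fun t => \sum_(i <- a :: l | P i) F i t) = (fun t => \sum_(i <- l | P i) F i t).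
  by apply/funext => t; rewrite big_cons Pa.
exact: IH.
Qed.
End Topo.



Definition Idx n := ((edge n * 'I_n) + {ffun edge n -> 'I_3})%type.

Definition lamv (R : realType) n (v : 'rV[R]_#|{: Idx n}|) : edge n -> 'I_n -> R :=
  fun e k => v ord0 (enum_rank (inl (e, k) : Idx n)).
Definition muv (R : realType) n (v : 'rV[R]_#|{: Idx n}|) : {ffun edge n -> 'I_3} -> R :=
  fun w => v ord0 (enum_rank (inr w : Idx n)).
Definition vec (R : realType) n (lam : edge n -> 'I_n -> R) (mu : {ffun edge n -> 'I_3} -> R)
  : 'rV[R]_#|{: Idx n}| :=
  \row_j (match enum_val j with inl p => lam p.1 p.2 | inr w => mu w end).

Lemma lamv_vec (R : realType) n lam mu : lamv (@vec R n lam mu) = lam.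
Proof. by apply/funext => e; apply/funext => k; rewrite /lamv mxE enum_rankK. Qed.
Lemma muv_vec (R : realType) n lam mu : muv (@vec R n lam mu) = mu.
Proof. by apply/funext => w; rewrite /muv mxE enum_rankK. Qed.

Lemma at2_ext (T : Type) n (d : T) (f g : edge n -> T) i j :
  (forall e, val e = [set i; j] -> f e = g e) -> at2 d f i j = at2 d g i j.
Proof. by move=> H; rewrite /at2; case: insubP => [e _ He|_] //=; rewrite H. Qed.

Lemma cont_at2 (R : realType) n m (G : edge n -> 'rV[R]_m -> R) i j :
  (forall e, continuous (G e)) -> continuous (fun v => at2 0 (fun e => G e v) i j).
Proof.
move=> H; rewrite /at2; case: insubP => [e _ _|_] /=; first exact: H.
exact: cont_cst.
Qed.

Lemma walk_attain (R : realType) n (hn : (2 < n)%N) (x : edge n -> R)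
  (x0 : forall e, 0 <= x e) :
  exists lam mu, DOPT_feasible (@is_walk n) x lam mu /\
  forall lam' mu', DOPT_feasible (@is_walk n) x lam' mu' ->
     DOPT_objective (@is_walk n) mu' <= DOPT_objective (@is_walk n) mu.
Proof.
set B := Xb x.
have at2x0 : forall i j, 0 <= at2 0 x i j.
  by move=> i j; rewrite /at2; case: insubP => [e _ _|_] //=.
have B0 : 0 <= B by apply: sumr_ge0 => i _; apply: sumr_ge0.
pose m := #|{: Idx n}|.
pose C1 := fun v : 'rV[R]_m => forall i j : 'I_n, i != j ->
   Aterm (lamv v) i j + Wterm (@is_walk n) (muv v) i j <= at2 0 x i j.
pose C2 := fun v : 'rV[R]_m => forall (e : edge n) (k : 'I_n), k \notin val e -> 0 <= lamv v e k.
pose C3 := fun v : 'rV[R]_m => forall w : {ffun edge n -> 'I_3}, is_walk w -> 0 <= muv v w.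
pose Cb := fun v : 'rV[R]_m => forall j, 0 <= v ord0 j /\ v ord0 j <= B.
pose A := fun v => ((C1 v /\ C2 v) /\ C3 v) /\ Cb v.
have AE : forall v, A v <-> DOPT_feasible (@is_walk n) x (lamv v) (muv v) /\ Cb v.
  move=> v; rewrite feasE; split; first by case=> [[[H1 H2] H3] H4].
  by case=> [[H1 H2 H3] H4].
have cA : closed A.
  apply: closed_and; last first.
    by apply: closed_forall => j; apply: closed_and; [apply: closed_gef | apply: closed_lef];
       exact: cont_coord.
  apply: closed_and; last first.
    apply: closed_forall => w; apply: closed_imp; apply: closed_gef; exact: cont_coord.
  apply: closed_and; last first.
    apply: closed_forall => e; apply: closed_forall => k; apply: closed_imp; apply: closed_gef.
    exact: cont_coord.
  apply: closed_forall => i; apply: closed_forall => j; apply: closed_imp; apply: closed_lef.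
  apply: cont_add.
    rewrite /Aterm; apply: cont_sum => k.
    apply: cont_add; first apply: cont_add; first apply: cont_opp.
    - exact: (@cont_at2 R n m (fun e v => lamv v e k) i j (fun e => @cont_coord R m _)).
    - exact: (@cont_at2 R n m (fun e v => lamv v e j) i k (fun e => @cont_coord R m _)).
    - exact: (@cont_at2 R n m (fun e v => lamv v e i) j k (fun e => @cont_coord R m _)).
  rewrite /Wterm; apply: cont_sum => w; apply: cont_scale; exact: cont_coord.
have cB := @rV_compact _ m (fun _ => `[0, B]%classic) (fun _ => @segment_compact R 0 B).
have cptA : compact A.
  apply: (subclosed_compact cA cB) => v [_ Hb] j /=.
  by have [h1 h2] := Hb j; rewrite in_itv /= h1 h2.
pose f := fun v : 'rV[R]_m => DOPT_objective (@is_walk n) (muv v).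
have cf : continuous f by apply: cont_sum => w; exact: cont_coord.
have lam0 : lamv (const_mx 0 : 'rV[R]_m) = fun _ _ => 0.
  by apply/funext => e; apply/funext => k; rewrite /lamv mxE.
have mu0 : muv (const_mx 0 : 'rV[R]_m) = fun _ => 0.
  by apply/funext => w; rewrite /muv mxE.
have A0 : A (const_mx 0).
  apply/AE; split; last by move=> j; rewrite mxE lexx B0.
  rewrite lam0 mu0; apply/feasE; split=> // i j ij.
  rewrite Aterm0 /Wterm big1 ?addr0 // => w _; by rewrite mulr0.
have [c /set_mem Ac cmax] := EVT_max_rV (ex_intro _ _ A0) cptA (continuous_subspaceT cf).
have [Fc _] := (AE c).1 Ac.
exists (lamv c), (muv c); split=> // lam' mu' Fm.
have [bl bm] := feas_bound hn Fm.
pose l0 := fun (e : edge n) (k : 'I_n) => if k \in val e then 0 else lam' e k.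
pose m0 := fun w : {ffun edge n -> 'I_3} => if `[< is_walk w >] then mu' w else 0.
have Wm : forall i j, Wterm (@is_walk n) m0 i j = Wterm (@is_walk n) mu' i j.
  by move=> i j; apply: eq_bigr => w /asboolP Ww; rewrite /m0 (asboolT Ww).
have Om : DOPT_objective (@is_walk n) m0 = DOPT_objective (@is_walk n) mu'.
  by apply: eq_bigr => w /asboolP Ww; rewrite /m0 (asboolT Ww).
have Al : forall i j, i != j -> Aterm l0 i j = Aterm lam' i j.
  move=> i j ij; apply: eq_bigr => k /andP [ki kj]; rewrite /l0.
  congr (- _ + _ + _); apply: at2_ext => e ->; rewrite !inE.
  - by rewrite (negbTE ki) (negbTE kj).
  - by rewrite eq_sym (negbTE ij) eq_sym (negbTE kj).
  - by rewrite (negbTE ij) eq_sym (negbTE ki).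
have Av : A (vec l0 m0).
  apply/AE; rewrite lamv_vec muv_vec; split.
    move/feasE: Fm => [F1 F2 F3]; apply/feasE; split.
    - by move=> i j ij; rewrite Al // Wm; exact: F1.
    - by move=> e k ke; rewrite /l0 (negbTE ke); exact: F2.
    - by move=> w Ww; rewrite /m0 (asboolT Ww); exact: F3.
  move=> j; rewrite mxE; case: (enum_val j) => [[e k]|w] /=.
    rewrite /l0; case: ifP => [_|/negbT ke]; first by rewrite lexx B0.
    split; last exact: bl e k ke.
    by move/feasE: Fm => [_ F2 _]; exact: F2.
  rewrite /m0; case: asboolP => [Ww|_]; last by rewrite lexx B0.
  split; last exact: bm w Ww.
  by move/feasE: Fm => [_ _ F3]; exact: F3.
have := cmax _ (mem_set Av); rewrite /f muv_vec Om; exact.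
Qed.


Theorem mainTheorem7 (R : realType) (n : nat) (hn : (3 <= n)%N)
    (x : edge n -> R) :
  is_SEP_vertex x ->
  exists v : R, DOPT_opt_value (@is_walk n) x v /\ DOPT_opt_value (@is_tour n) x v.
Proof.
case=> [[_ _ xb] _].
have x0 : forall e, 0 <= x e by move=> e; case/andP: (xb e).
have [lam [mu [F M]]] := walk_attain hn x0.
exists (DOPT_objective (@is_walk n) mu); split.
  by split; [exists lam, mu | exact: M].
split.
  have [lam' [mu' [F' O']]] := walk2tour hn F.
  by exists lam', mu'; split.
move=> l m Ft; have [mu2 [F2 O2]] := tour2walk hn Ft; rewrite -O2; exact: (M _ _ F2).
Qed.
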